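(* Let $w,x\in\mathfrak{S}_n$ be such that $x$ is represented by a run, i.e. $x=\sigma_p\sigma_{p+1}\cdots\sigma_{p+q}$ or $x=\sigma_p\sigma_{p-1}\cdots\sigma_{p-q}$ for some $p$ and $q\ge0$. Then $|\lambda_1(wx)-\lambda_1(w)|\le1$.
   Context: Permutations are composed right to left and $\sigma_i=(i,i+1)$. For $u\in\mathfrak{S}_n$, $\lambda_1(u)$ is the length of the first row of the shape of the tableaux associated to $u$ by the Robinson–Schensted correspondence; equivalently, the length of a longest increasing subsequence of the one-line notation of $u$. *)

(* Defs.v *)
From mathcomp Require Import all_boot all_order all_fingroup.
Set Implicit Arguments. Unset Strict Implicit. Unset Printing Implicit Defensive.

(* Permutations of {1,...,n} are modelled as {perm 'I_n}; the value k of 'I_n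
   stands for the letter k+1. *)

(* Composition right to left: (perm_comp u v) i = u (v i).
   (MathComp's group product is left to right: (v * u)%g i = u (v i).) *)
Definition perm_comp n (u v : {perm 'I_n}) : {perm 'I_n} := (v * u)%g.

(* sigma_i = (i, i+1) for 1 <= i <= n-1, i.e. the transposition of the
   0-based positions i-1 and i; it is the identity for out-of-range i. *)
Definition sigma n (i : nat) : {perm 'I_n} :=
  match (insub i.-1 : option 'I_n), (insub i : option 'I_n) with
  | Some a, Some b => tperm a b
  | _, _ => 1%g
  end.

Definition sigma_word n (l : seq nat) : {perm 'I_n} :=
  foldr (fun i acc => perm_comp (sigma n i) acc) 1%g l.

Definition run_up n (p q : nat) : {perm 'I_n} :=
  sigma_word n [seq p + k | k <- iota 0 q.+1].

Definition run_down n (p q : nat) : {perm 'I_n} :=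
  sigma_word n [seq p - k | k <- iota 0 q.+1].

Definition lambda1 n (u : {perm 'I_n}) : nat :=
  \max_(A : {set 'I_n} |
          [forall i in A, forall j in A, (i < j) ==> (u i < u j)]) #|A|.

(* Main.v *)
Require Import Defs.
From mathcomp Require Import all_boot all_order all_fingroup.
From mathcomp Require Import zify.
Set Implicit Arguments. Unset Strict Implicit. Unset Printing Implicit Defensive.

Ltac split_ifs := repeat match goal with |- context[if ?b then _ else _] =>
  (lazymatch b with context[if _ then _ else _] => fail | _ => idtac end);
  let H := fresh "H" in destruct b eqn:H end.

Lemma sigmaE n i (k : 'I_n) : 1 <= i -> i < n ->
  nat_of_ord (sigma n i k) = if nat_of_ord k == i.-1 then i else if nat_of_ord k == i then i.-1 else nat_of_ord k.
Proof.
move=> h1 h2; rewrite /sigma.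
have h3 : i.-1 < n by lia.
rewrite (insubT (fun m => m < n) h3) (insubT (fun m => m < n) h2) /=.
case: tpermP => [->|->|/eqP a /eqP b] /=; rewrite ?eqxx //.
- by have -> : (i == i.-1) = false by apply/eqP; lia.
- rewrite -(inj_eq val_inj) /= in a; rewrite -(inj_eq val_inj) /= in b.
  by rewrite (negbTE a) (negbTE b).
Qed.

Lemma sigma_word_cons n i l (k : 'I_n) :
  sigma_word n (i :: l) k = sigma n i (sigma_word n l k).
Proof. by rewrite /= /perm_comp permM. Qed.

Lemma run_upE n p q (k : 'I_n) : 1 <= p -> p + q < n ->
  nat_of_ord (run_up n p q k) =
  if (p.-1 <= k) && (k < p + q) then k.+1 else if nat_of_ord k == p + q then p.-1 else nat_of_ord k.
Proof.
elim: q p => [|q IH] p h1 h2.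
  rewrite /run_up /= /perm_comp mul1g sigmaE //; last lia.
  by split_ifs; lia.
have E : [seq p + k | k <- iota 1 q.+1] = [seq p.+1 + k | k <- iota 0 q.+1].
  rewrite (_ : iota 1 q.+1 = iota (1 + 0) q.+1) // iotaDl -map_comp; apply: eq_map => z /=; lia.
rewrite /run_up (_ : iota 0 q.+2 = 0 :: iota 1 q.+1) // map_cons E addn0.
rewrite sigma_word_cons sigmaE; [|lia|lia].
move: (IH p.+1 ltac:(lia) ltac:(lia)); rewrite /run_up => ->.
by split_ifs; lia.
Qed.

Lemma run_downE n p q (k : 'I_n) : q < p -> p < n ->
  nat_of_ord (run_down n p q k) =
  if (p - q <= k) && (k <= p) then k.-1 else if nat_of_ord k == (p - q).-1 then p else nat_of_ord k.
Proof.
elim: q p => [|q IH] p h1 h2.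
  rewrite /run_down /= /perm_comp mul1g subn0 sigmaE //; try lia.
  by split_ifs; lia.
have E : [seq p - k | k <- iota 1 q.+1] = [seq p.-1 - k | k <- iota 0 q.+1].
  rewrite (_ : iota 1 q.+1 = iota (1 + 0) q.+1) // iotaDl -map_comp; apply: eq_map => z /=; lia.
rewrite /run_down (_ : iota 0 q.+2 = 0 :: iota 1 q.+1) // map_cons E subn0.
rewrite sigma_word_cons sigmaE; [|lia|lia].
move: (IH p.-1 ltac:(lia) ltac:(lia)); rewrite /run_down => ->.
by split_ifs; lia.
Qed.

Definition mono_ex n (x : {perm 'I_n}) (c : 'I_n) :=
  forall i j : 'I_n, i != c -> j != c -> i < j -> x i < x j.

Lemma mono_ex_inv n (x : {perm 'I_n}) c : mono_ex x c -> mono_ex (x^-1)%g (x c).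
Proof.
move=> h i j hi hj ij.
have ha : (x^-1)%g i != c by apply: contra hi => /eqP <-; rewrite permKV.
have hb : (x^-1)%g j != c by apply: contra hj => /eqP <-; rewrite permKV.
case: (ltngtP ((x^-1)%g i) ((x^-1)%g j)) => // [lt|eq].
  by move: (h _ _ hb ha lt); rewrite !permKV => /(ltn_trans ij); rewrite ltnn.
by move/val_inj: eq => /perm_inj eq; rewrite eq ltnn in ij.
Qed.

Lemma lambda1_le n (w x : {perm 'I_n}) c : mono_ex x c ->
  lambda1 (perm_comp w x) <= lambda1 w + 1.
Proof.
move=> h; rewrite /lambda1; apply/bigmax_leqP => A /forall_inP HA.
set B := x @: (A :\ c).
have HB : [forall i in B, forall j in B, (i < j) ==> (w i < w j)].
  apply/forall_inP => i /imsetP [a /setD1P [ac aA] ->].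
  apply/forall_inP => j /imsetP [b /setD1P [bc bA] ->].
  apply/implyP => lt.
  have ab : a < b.
    case: (ltngtP a b) => // [gt|eq].
      by move: (h _ _ bc ac gt) => /(ltn_trans lt); rewrite ltnn.
    by move/val_inj: eq => eq; rewrite eq ltnn in lt.
  by move: (HA a aA) => /forall_inP /(_ b bA) /implyP /(_ ab); rewrite /perm_comp !permM.
apply: leq_trans (leq_add (leq_bigmax_cond _ HB) (leqnn 1)).
rewrite card_imset; last exact: perm_inj.
by rewrite (cardsD1 c A) addnC leq_add2l; case: (c \in A).
Qed.

Lemma lambda1_both n (w x : {perm 'I_n}) c : mono_ex x c ->
  lambda1 (perm_comp w x) <= lambda1 w + 1 /\ lambda1 w <= lambda1 (perm_comp w x) + 1.
Proof.
move=> h; split; first exact: lambda1_le h.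
have := lambda1_le (perm_comp w x) (mono_ex_inv h).
by rewrite /perm_comp mulKg.
Qed.

Theorem lemma6p2 (n : nat) (w x : {perm 'I_n}) :
  (exists p q : nat,
     (1 <= p /\ p + q <= n - 1 /\ x = run_up n p q) \/
     (q < p /\ p <= n - 1 /\ x = run_down n p q)) ->
  lambda1 (perm_comp w x) <= lambda1 w + 1 /\ lambda1 w <= lambda1 (perm_comp w x) + 1.
Proof.
move=> [p [q [[h1 [h2 ->]]|[h1 [h2 ->]]]]].
- have hc : p + q < n by lia.
  apply: (@lambda1_both _ w _ (Ordinal hc)) => i j hi hj ij.
  rewrite -(inj_eq val_inj) /= in hi; rewrite -(inj_eq val_inj) /= in hj.
  rewrite !run_upE; try lia.
  by split_ifs; lia.
- have hc : (p - q).-1 < n by lia.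
  apply: (@lambda1_both _ w _ (Ordinal hc)) => i j hi hj ij.
  rewrite -(inj_eq val_inj) /= in hi; rewrite -(inj_eq val_inj) /= in hj.
  rewrite !run_downE; try lia.
  by split_ifs; lia.
Qed.
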